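(* Let $X$ and $Y$ be nonempty sets with $\operatorname{card} Y\ge 2$, and let $\mathcal P$ be a nonempty collection of subsets of $X$. Define the binary relation $\hat{\mathcal P}_w$ on $Y^X$ by declaring $f\,\hat{\mathcal P}_w\,g$ if and only if there exists $P\in\mathcal P$ with $P\subseteq\{x\in X\mid f(x)=g(x)\}$. Then $\mathcal P$ is a filterbase on $X$ if and only if $\hat{\mathcal P}_w$ is a nontrivial equivalence relation on $Y^X$.
   Context: Let $X$ be a nonempty set. A nonempty collection $\mathcal P$ of subsets of $X$ is a filterbase on $X$ if it satisfies: (F0) for every $n\ge 1$ and all $A_1,\dots,A_n\in\mathcal P$, $A_1\cap\cdots\cap A_n\neq\emptyset$; (F2) for all $A,B\in\mathcal P$ there is $C\in\mathcal P$ with $C\subseteq A\cap B$. $Y^X$ denotes the set of all functions $X\to Y$. An equivalence relation on a set $S$ is called nontrivial if it is not the total relation $S\times S$ (i.e. not all pairs of elements are related). *)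

(* Defs.v *)
From Stdlib Require Import List.
Import ListNotations.

Definition list_inter {X : Type} (l : list (X -> Prop)) : X -> Prop :=
  fun x => Forall (fun A => A x) l.

(* Filterbase: nonempty collection, (F0) every finite nonempty subfamily has
   nonempty intersection, (F2) downward directed. *)
Definition filterbase {X : Type} (PP : (X -> Prop) -> Prop) : Prop :=
  (exists A, PP A) /\
  (forall l : list (X -> Prop), l <> [] -> Forall PP l ->
      exists x, list_inter l x) /\
  (forall A B, PP A -> PP B ->
      exists C, PP C /\ (forall x, C x -> A x /\ B x)).

Definition Pw_rel {X Y : Type} (PP : (X -> Prop) -> Prop) (f g : X -> Y) : Prop :=
  exists P, PP P /\ (forall x, P x -> f x = g x).

Definition is_equivalence {S : Type} (R : S -> S -> Prop) : Prop :=
  (forall a, R a a) /\ (forall a b, R a b -> R b a) /\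
  (forall a b c, R a b -> R b c -> R a c).

Definition nontrivial_rel {S : Type} (R : S -> S -> Prop) : Prop :=
  exists a b, ~ R a b.

(* Main.v *)
Require Import Defs.
From Stdlib Require Import List Classical ClassicalEpsilon.
Import ListNotations.

Lemma list_down {X : Type} (PP : (X -> Prop) -> Prop)
  (F2 : forall A B, PP A -> PP B -> exists C, PP C /\ (forall x, C x -> A x /\ B x)) :
  forall l, l <> [] -> Forall PP l -> exists C, PP C /\ (forall x, C x -> list_inter l x).
Proof.
  induction l as [|A l IH]; intros Hne Hf; [congruence|].
  inversion Hf; subst.
  destruct l as [|B l'].
  - exists A; split; auto. intros x Hx. unfold list_inter. constructor; auto.
  - destruct (IH ltac:(discriminate) H2) as [C [HC HCi]].
    destruct (F2 A C H1 HC) as [D [HD HDi]].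
    exists D; split; auto. intros x Hx. destruct (HDi x Hx).
    unfold list_inter. constructor; auto. apply HCi; auto.
Qed.

Theorem mainTheorem2 (X Y : Type) (PP : (X -> Prop) -> Prop)
  (hX : inhabited X) (hY : exists y1 y2 : Y, y1 <> y2)
  (hPP : exists A, PP A) :
  filterbase PP <-> (is_equivalence (@Pw_rel X Y PP) /\ nontrivial_rel (@Pw_rel X Y PP)).
Proof.
  destruct hY as [y1 [y2 Hy]].
  split.
  - intros [_ [F0 F2]]. split; [split; [|split]|].
    + intros a. destruct hPP as [A HA]. exists A; auto.
    + intros a b [P [HP HPe]]. exists P; split; auto. intros x Hx; symmetry; auto.
    + intros a b c [P [HP HPe]] [Q [HQ HQe]].
      destruct (F2 P Q HP HQ) as [C [HC HCi]]. exists C; split; auto.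
      intros x Hx. destruct (HCi x Hx). rewrite HPe; auto.
    + exists (fun _ => y1), (fun _ => y2). intros [P [HP HPe]].
      destruct (F0 [P] ltac:(discriminate) ltac:(constructor; auto)) as [x Hx].
      inversion Hx; subst. apply Hy. apply (HPe x); auto.
  - intros [[Hr [Hs Ht]] [a [b Hab]]].
    assert (F2 : forall A B, PP A -> PP B -> exists C, PP C /\ (forall x, C x -> A x /\ B x)).
    { intros A B HA HB.
      set (f := fun _ : X => y1).
      set (g := fun x => if excluded_middle_informative (A x) then y1 else y2).
      set (h := fun x => if excluded_middle_informative (A x /\ B x) then y1 else y2).
      assert (Hfg : Pw_rel PP f g).
      { exists A; split; auto. intros x Hx. unfold f, g.
        destruct (excluded_middle_informative (A x)); tauto. }
      assert (Hgh : Pw_rel PP g h).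
      { exists B; split; auto. intros x Hx. unfold g, h.
        destruct (excluded_middle_informative (A x));
        destruct (excluded_middle_informative (A x /\ B x)); tauto. }
      destruct (Ht _ _ _ Hfg Hgh) as [C [HC HCe]].
      exists C; split; auto. intros x Hx. specialize (HCe x Hx). unfold f, h in HCe.
      destruct (excluded_middle_informative (A x /\ B x)); auto. congruence. }
    split; [exact hPP|split; [|exact F2]].
    intros l Hne Hf.
    destruct (list_down PP F2 l Hne Hf) as [C [HC HCi]].
    destruct (classic (exists x, C x)) as [[x Hx]|Hn].
    + exists x; auto.
    + exfalso. apply Hab. exists C; split; auto. intros x Hx. exfalso; eauto.
Qed.
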